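(* Let $Q$ be a symmetric Leibniz algebra and $L$ a dense subalgebra of $Q$, and suppose $Q$ is a multiplicatively semiprime algebra of quotients of $L$. Then for every essential ideal $I$ of $L$, the extension $I\subseteq Q$ is dense.
   Context: A symmetric Leibniz algebra satisfies both $[x,[y,z]]=[[x,y],z]-[[x,z],y]$ and $[x,[y,z]]=[[x,y],z]+[y,[x,z]]$. For $x\in Q$, $R_x(u)=[u,x]$, $L_x(u)=[x,u]$. $M(Q)$ is the associative subalgebra of $\mathrm{End}(Q)$ generated by the identity and all $R_x,L_x$ ($x\in Q$). For a subalgebra $K$ of $Q$, $K^{ann}=\{\mu\in M(Q):\mu(x)=0\ \forall x\in K\}$, and $K$ is dense in $Q$ (the extension $K\subseteq Q$ is dense) if $K^{ann}=\{0\}$. A Leibniz algebra is semiprime if $[I,I]\ne\{0\}$ for every nonzero ideal $I$ (ideals: subspaces $I$ with $[I,L]\subseteq I$, $[L,I]\subseteq I$); an associative algebra is semiprime if it has no nonzero two-sided ideal with zero square. $Q$ is multiplicatively semiprime if $Q$ and $M(Q)$ are both semiprime. An ideal $I$ of $L$ is essential if $I\cap J\ne\{0\}$ for each nonzero ideal $J$ of $L$. With $\mathscr{A}_Q(L)$ the associative algebra generated by $R_x,L_y$ ($x,y\in L$) acting on $Q$, ${}_L(q)=\mathbb{F}q+\{\sum\xi_i(q):\xi_i\in\mathscr{A}_Q(L)\}$ and $(L:q)=\{x\in L:[x,{}_L(q)]\subseteq L,[{}_L(q),x]\subseteq L\}$; $Q$ is an algebra of quotients of $L$ if for all $p,q\in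 Q$, $p\ne0$, there is $x\in(L:q)$ with $[x,p]\ne0$ or $y\in(L:q)$ with $[p,y]\ne0$. *)

(* Defs.v *)
From mathcomp Require Import all_boot all_algebra.
Set Implicit Arguments. Unset Strict Implicit. Unset Printing Implicit Defensive.
Import GRing.Theory.
Local Open Scope ring_scope.

Section LeibnizDefs.
Variables (F : fieldType) (Q : lmodType F) (br : Q -> Q -> Q).

Definition bilinear_br : Prop :=
  (forall a x y z, br (a *: x + y) z = a *: br x z + br y z) /\
  (forall a x y z, br x (a *: y + z) = a *: br x y + br x z).

Definition symmetric_leibniz : Prop :=
  (forall x y z, br x (br y z) = br (br x y) z - br (br x z) y) /\
  (forall x y z, br x (br y z) = br (br x y) z + br y (br x z)).

Definition Rop (x : Q) : Q -> Q := fun u => br u x.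
Definition Lop (x : Q) : Q -> Q := fun u => br x u.

Definition subspace (S : Q -> Prop) : Prop :=
  S 0 /\ (forall a x y, S x -> S y -> S (a *: x + y)).

Definition subalgebra (S : Q -> Prop) : Prop :=
  subspace S /\ (forall x y, S x -> S y -> S (br x y)).

Definition ideal_of (L I : Q -> Prop) : Prop :=
  subspace I /\ (forall x, I x -> L x) /\
  (forall x y, I x -> L y -> I (br x y)) /\
  (forall x y, I x -> L y -> I (br y x)).

Definition nonzero_set (S : Q -> Prop) : Prop := exists x, S x /\ x <> 0.

Definition semiprime_leibniz (L : Q -> Prop) : Prop :=
  forall I, ideal_of L I -> nonzero_set I ->
    exists x y, I x /\ I y /\ br x y <> 0.

Definition essential_ideal (L I : Q -> Prop) : Prop :=
  ideal_of L I /\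
  forall J, ideal_of L J -> nonzero_set J -> exists x, I x /\ J x /\ x <> 0.

(* M(Q): associative subalgebra of End(Q) generated by id and all R_x, L_x *)
Inductive inM : (Q -> Q) -> Prop :=
  | inM_id : inM id
  | inM_R x : inM (Rop x)
  | inM_L x : inM (Lop x)
  | inM_zero : inM (fun _ => 0)
  | inM_add f g : inM f -> inM g -> inM (fun u => f u + g u)
  | inM_scale a f : inM f -> inM (fun u => a *: f u)
  | inM_comp f g : inM f -> inM g -> inM (fun u => f (g u)).

Definition nonzero_map (f : Q -> Q) : Prop := exists u, f u <> 0.

Definition M_ideal (J : (Q -> Q) -> Prop) : Prop :=
  (forall f, J f -> inM f) /\
  J (fun _ => 0) /\
  (forall f g, J f -> J g -> J (fun u => f u + g u)) /\
  (forall a f, J f -> J (fun u => a *: f u)) /\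
  (forall f g, inM f -> J g -> J (fun u => f (g u))) /\
  (forall f g, J f -> inM g -> J (fun u => f (g u))).

Definition M_semiprime : Prop :=
  forall J, M_ideal J -> (exists f, J f /\ nonzero_map f) ->
    exists f g, J f /\ J g /\ nonzero_map (fun u => f (g u)).

Definition mult_semiprime : Prop :=
  semiprime_leibniz (fun _ => True) /\ M_semiprime.

Definition dense (K : Q -> Prop) : Prop :=
  forall mu, inM mu -> (forall x, K x -> mu x = 0) -> forall u, mu u = 0.

(* A_Q(L): associative algebra generated by R_x, L_y (x, y in L) *)
Inductive inA (L : Q -> Prop) : (Q -> Q) -> Prop :=
  | inA_R x : L x -> inA L (Rop x)
  | inA_L x : L x -> inA L (Lop x)
  | inA_zero : inA L (fun _ => 0)
  | inA_add f g : inA L f -> inA L g -> inA L (fun u => f u + g u)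
  | inA_scale a f : inA L f -> inA L (fun u => a *: f u)
  | inA_comp f g : inA L f -> inA L g -> inA L (fun u => f (g u)).

Definition genL (L : Q -> Prop) (q p : Q) : Prop :=
  exists (a : F) (n : nat) (xi : 'I_n -> Q -> Q),
    (forall i, inA L (xi i)) /\ p = a *: q + \sum_(i < n) xi i q.

Definition Lcolon (L : Q -> Prop) (q x : Q) : Prop :=
  L x /\ (forall p, genL L q p -> L (br x p)) /\
         (forall p, genL L q p -> L (br p x)).

Definition algebra_of_quotients (L : Q -> Prop) : Prop :=
  forall p q, p <> 0 ->
    (exists x, Lcolon L q x /\ br x p <> 0) \/
    (exists y, Lcolon L q y /\ br p y <> 0).

End LeibnizDefs.

(* Main.v *)
Require Import Defs.
From mathcomp Require Import all_boot all_algebra.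
Set Implicit Arguments. Unset Strict Implicit. Unset Printing Implicit Defensive.
Import GRing.Theory.
Local Open Scope ring_scope.

Theorem proposition6p5 (F : fieldType) (Q : lmodType F) (br : Q -> Q -> Q)
  (L : Q -> Prop) :
  bilinear_br br -> symmetric_leibniz br ->
  subalgebra br L -> dense br L ->
  mult_semiprime br -> algebra_of_quotients br L ->
  forall I : Q -> Prop, essential_ideal br L I -> dense br I.
Proof.
move=> [Hl Hr] [Hs1 Hs2] Hsub Hdense [HQsp HMsp] Hquot I [Hid Hess] mu Hmu HmuI u.
have br0l : forall z, br 0 z = 0.
  move=> z; have := Hl (-1) 0 0 z; rewrite scaler0 addr0 scaleN1r addNr => ->//.
have br0r : forall z, br z 0 = 0.
  move=> z; have := Hr (-1) z 0 0; rewrite scaler0 addr0 scaleN1r addNr => ->//.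
have brZl : forall a x z, br (a *: x) z = a *: br x z.
  move=> a x z; have := Hl a x 0 z; rewrite addr0 br0l addr0 //.
have brZr : forall a x z, br z (a *: x) = a *: br z x.
  move=> a x z; have := Hr a z x 0; rewrite addr0 br0r addr0 //.
have lin : forall f, inM br f -> forall a x y, f (a *: x + y) = a *: f x + f y.
  move=> f0; elim => /=.
  - by [].
  - move=> x a y z; rewrite /Rop; exact: Hl.
  - move=> x a y z; rewrite /Lop; exact: Hr.
  - by move=> a x y; rewrite scaler0 addr0.
  - move=> f g _ IHf _ IHg a x y; by rewrite IHf IHg scalerDr addrACA.
  - move=> b f _ IH a x y; rewrite IH scalerDr !scalerA; congr (_ *: _ + _); exact: mulrC.
  - move=> f g _ IHf _ IHg a x y; by rewrite IHg IHf.
have f0 : forall f, inM br f -> f 0 = 0.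
  move=> f Hf; have := lin f Hf (-1) 0 0; rewrite scaler0 addr0 scaleN1r addNr => ->//.
have fD : forall f, inM br f -> forall x y, f (x + y) = f x + f y.
  move=> f Hf x y; have := lin f Hf 1 x y; rewrite !scale1r //.
have fZ : forall f, inM br f -> forall a x, f (a *: x) = a *: f x.
  move=> f Hf a x; have := lin f Hf a x 0; rewrite !addr0 f0 // addr0 //.
case: Hid => [[HI0 HIlin] [HIL [HIr HIl]]].
have step1 : forall nu, inM br nu -> (forall i, I i -> nu i = 0) ->
    forall i, I i -> forall v, nu (br i v) = 0 /\ nu (br v i) = 0.
  move=> nu Hnu Hnui i Hi v; split.
  - exact: (Hdense (fun w => nu (Lop br i w)) (inM_comp Hnu (inM_L br i))
      (fun x Lx => Hnui _ (HIr _ _ Hi Lx)) v).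
  - exact: (Hdense (fun w => nu (Rop br i w)) (inM_comp Hnu (inM_R br i))
      (fun x Lx => Hnui _ (HIl _ _ Hi Lx)) v).
have step2 : forall g, inM br g -> forall nu, inM br nu ->
    (forall i, I i -> nu i = 0) -> forall i, I i -> nu (g i) = 0.
  move=> g0; elim => [|x|x| |f g _ IHf _ IHg|a f _ IH|f g Hf IHf _ IHg] nu Hnu Hnui i Hi /=.
  - exact: Hnui.
  - rewrite /Rop; exact: (step1 nu Hnu Hnui i Hi x).1.
  - rewrite /Lop; exact: (step1 nu Hnu Hnui i Hi x).2.
  - exact: f0.
  - by rewrite fD // IHf // IHg // addr0.
  - by rewrite fZ // IH // scaler0.
  - apply: (IHg (fun v => nu (f v))) => //; first exact: inM_comp.
    move=> j Hj; exact: IHf.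
pose J := fun h => inM br h /\ (forall i, I i -> h i = 0) /\
  (forall v nu, inM br nu -> (forall i, I i -> nu i = 0) -> nu (h v) = 0).
have HJ : M_ideal br J.
  split; first by move=> f [].
  split.
    split; first exact: inM_zero.
    split => // v nu Hnu _; exact: f0.
  split.
    move=> f g [Hf [Hfi Hfu]] [Hg [Hgi Hgu]]; split; first exact: inM_add.
    split; first by move=> i Hi; rewrite Hfi // Hgi // addr0.
    by move=> v nu Hnu Hnui; rewrite fD // Hfu // Hgu // addr0.
  split.
    move=> a f [Hf [Hfi Hfu]]; split; first exact: inM_scale.
    split; first by move=> i Hi; rewrite Hfi // scaler0.
    by move=> v nu Hnu Hnui; rewrite fZ // Hfu // scaler0.
  split.
    move=> f g Hf [Hg [Hgi Hgu]]; split; first exact: inM_comp.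
    split; first by move=> i Hi; rewrite Hgi // f0.
    move=> v nu Hnu Hnui; apply: (Hgu v (fun w => nu (f w))); first exact: inM_comp.
    move=> i Hi; exact: (step2 f Hf nu Hnu Hnui i Hi).
  move=> f g [Hf [Hfi Hfu]] Hg; split; first exact: inM_comp.
  split; first by move=> i Hi; exact: (step2 g Hg f Hf Hfi i Hi).
  move=> v nu Hnu Hnui; exact: Hfu.
have Jzero : forall h, J h -> forall v, h v = 0.
  move=> h Hh v; case: (eqVneq (h v) 0) => // /eqP Hne; exfalso.
  have [f [g [Jf [Jg [w Hw]]]]] := HMsp J HJ (ex_intro _ h (conj Hh (ex_intro _ v Hne))).
  apply: Hw; case: Jg => _ [_ Hgu]; case: Jf => Hf [Hfi _]; exact: Hgu.
have Hp : forall i, I i -> br i (mu u) = 0 /\ br (mu u) i = 0.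
  move=> i Hi; split.
  - apply: (Jzero (fun v => Lop br i (mu v))).
    split; first exact: (inM_comp (inM_L br i) Hmu).
    split; first by move=> j Hj; rewrite /Lop HmuI // br0r.
    move=> v nu Hnu Hnui; exact: (step1 nu Hnu Hnui i Hi (mu v)).1.
  - apply: (Jzero (fun v => Rop br i (mu v))).
    split; first exact: (inM_comp (inM_R br i) Hmu).
    split; first by move=> j Hj; rewrite /Rop HmuI // br0l.
    move=> v nu Hnu Hnui; exact: (step1 nu Hnu Hnui i Hi (mu v)).2.
case: (eqVneq (mu u) 0) => // /eqP Hne; exfalso.
move: Hp Hne; set p := mu u => Hp Hne.
have [s [Ls [Hs0 Hsann]]] : exists s, L s /\ s <> 0 /\
    forall i, I i -> br i s = 0 /\ br s i = 0.
  have genp : genL br L p p.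
    exists 1, 0%N, (fun _ _ => 0); split; first by case.
    by rewrite big_ord0 addr0 scale1r.
  case: (Hquot p p Hne) => [[x [[Lx [Hxl Hxr]] Hxp]] | [y [[Ly [Hyl Hyr]] Hpy]]].
  - exists (br x p); split; first exact: Hxl.
    split => // i Hi; split.
    + rewrite Hs2 (Hp _ (HIr _ _ Hi Lx)).1 (Hp i Hi).1 br0r addr0 //.
    + have := Hs1 x p i.
      rewrite (Hp i Hi).2 br0r (Hp _ (HIl _ _ Hi Lx)).1 subr0 => <- //.
  - exists (br p y); split; first exact: Hyr.
    split => // i Hi; split.
    + rewrite Hs2 (Hp i Hi).1 br0l (Hp _ (HIr _ _ Hi Ly)).2 addr0 //.
    + have := Hs1 p y i.
      rewrite (Hp _ (HIl _ _ Hi Ly)).2 (Hp i Hi).2 br0l subr0 => <- //.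
pose J0 := fun v => L v /\ forall i, I i -> br i v = 0 /\ br v i = 0.
have HJ0 : ideal_of br L J0.
  split.
    split.
      split; first exact: Hsub.1.1.
      by move=> i Hi; rewrite br0l br0r.
    move=> a x y [Lx Hx] [Ly Hy]; split; first exact: Hsub.1.2.
    move=> i Hi; rewrite Hl Hr (Hx i Hi).1 (Hx i Hi).2 (Hy i Hi).1 (Hy i Hi).2.
    by rewrite scaler0 addr0.
  split; first by move=> x [].
  split.
    move=> x y [Lx Hx] Ly; split; first exact: Hsub.2.
    move=> i Hi; split.
    + rewrite Hs2 (Hx i Hi).1 br0l (Hx _ (HIr _ _ Hi Ly)).2 addr0 //.
    + have := Hs1 x y i.
      rewrite (Hx _ (HIl _ _ Hi Ly)).2 (Hx i Hi).2 br0l subr0 => <- //.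
  move=> x y [Lx Hx] Ly; split; first exact: Hsub.2.
  move=> i Hi; split.
  + rewrite Hs2 (Hx _ (HIr _ _ Hi Ly)).1 (Hx i Hi).1 br0r addr0 //.
  + have := Hs1 y x i.
    rewrite (Hx i Hi).2 br0r (Hx _ (HIl _ _ Hi Ly)).1 subr0 => <- //.
have [k [Ik [[Lk Hk] Hk0]]] := Hess J0 HJ0 (ex_intro _ s (conj (conj Ls Hsann) Hs0)).
have Lk0 : forall y, br k y = 0.
  apply: (Jzero (Lop br k)); split; first exact: inM_L.
  split; first by move=> i Hi; exact: (Hk i Hi).2.
  move=> v nu Hnu Hnui; exact: (step1 nu Hnu Hnui k Ik v).1.
have Rk0 : forall y, br y k = 0.
  apply: (Jzero (Rop br k)); split; first exact: inM_R.
  split; first by move=> i Hi; exact: (Hk i Hi).1.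
  move=> v nu Hnu Hnui; exact: (step1 nu Hnu Hnui k Ik v).2.
have Hid2 : ideal_of br (fun _ => True) (fun v => exists a, v = a *: k).
  split.
    split; first by exists 0; rewrite scale0r.
    move=> a x y [b ->] [c ->]; exists (a * b + c); by rewrite scalerDl scalerA.
  split => //.
  split.
    move=> x y [a ->] _; exists 0; by rewrite scale0r brZl Lk0 scaler0.
  move=> x y [a ->] _; exists 0; by rewrite scale0r brZr Rk0 scaler0.
have [x [y [[a ->] [_ Hne2]]]] :=
  HQsp _ Hid2 (ex_intro _ k (conj (ex_intro _ 1 (esym (scale1r k))) Hk0)).
by apply: Hne2; rewrite brZl Lk0 scaler0.
Qed.
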